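(* Let $m\ge2$. There exist constants $\alpha,c>0$ and $d\ge0$, depending only on $m$ and $n$, such that for all $A_1,\dots,A_m\in\mathcal{P}$, $$\mathrm{tr}(A_1A_2^{-1})+\mathrm{tr}(A_2A_3^{-1})+\dots+\mathrm{tr}(A_{m-1}A_m^{-1})\ge c\,\mathrm{tr}(A_1^\alpha A_m^{-\alpha})-d.$$
   Context: $\mathcal{P}$ is the space of positive definite $n\times n$ real symmetric matrices, with $n$ fixed; powers $A^\alpha$ are defined by functional calculus. *)

(* Defs.v *)
From HB Require Import structures.
From mathcomp Require Import all_boot all_order all_algebra.
From mathcomp Require Import boolp reals exp.
Set Implicit Arguments. Unset Strict Implicit. Unset Printing Implicit Defensive.
Import Order.TTheory GRing.Theory Num.Theory.
Local Open Scope ring_scope.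

Definition posdef (R : realType) (n : nat) (A : 'M[R]_n) : Prop :=
  A^T = A /\ forall v : 'cV[R]_n, v != 0 -> 0 < (v^T *m A *m v) 0 0.

Definition spec_decomp (R : realType) (n : nat) (A : 'M[R]_n)
    (Q : 'M[R]_n) (d : 'rV[R]_n) : Prop :=
  Q^T *m Q = 1%:M /\ (forall i, 0 < d 0 i) /\ A = Q *m diag_mx d *m Q^T.

(* Functional calculus: A^a := Q diag(d_i^a) Q^T for a spectral decomposition
   of A (for positive definite A one exists, and the result does not depend on
   the chosen decomposition); 0 for matrices without such decomposition. *)
Definition matpow (R : realType) (n : nat) (A : 'M[R]_n) (a : R) : 'M[R]_n :=
  match pselect (exists p : 'M[R]_n * 'rV[R]_n, spec_decomp A p.1 p.2) with
  | left h => let p := projT1 (cid h) in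
      p.1 *m diag_mx (map_mx (fun x => powR x a) p.2) *m p.1^T
  | right _ => 0
  end.

(* Main.v *)
Require Import Defs.
From HB Require Import structures.
From mathcomp Require Import all_boot all_order all_algebra.
From mathcomp Require Import boolp reals exp.
From mathcomp Require Import ring lra.
Import Order.TTheory GRing.Theory Num.Theory.
Local Open Scope ring_scope.
Set Implicit Arguments. Unset Strict Implicit.

Lemma posdef_unit (R : realType) n (B : 'M[R]_n) : posdef B -> B \in unitmx.
Proof.
move=> [Bs Bp]; rewrite -row_free_unit -kermx_eq0; apply/eqP.
have [[i Hi]|H] := pselect (exists i, row i (kermx B) != 0); last first.
  apply/row_matrixP => i; rewrite row0; apply/eqP.
  by apply/negPn/negP => Hi; apply: H; exists i.
have := Bp (row i (kermx B))^T.
rewrite trmx_eq0 Hi => /(_ isT); rewrite trmxK.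
have /sub_kermxP -> : (row i (kermx B) <= kermx B)%MS by exact: row_sub.
by rewrite mul0mx mxE ltxx.
Qed.
Lemma chol (R : realType) n (B : 'M[R]_n) : posdef B -> exists G : 'M[R]_n, B = G *m G^T.
Proof.
elim: n B => [|n IH] B PB.
  by exists 0; apply/matrixP => [[]].
pose B' : 'M[R]_(1 + n) := B.
have [Bs Bp] := PB.
have Bs' : B'^T = B' by [].
pose Aul := ulsubmx B'. pose b := dlsubmx B'. pose C := drsubmx B'.
have hbT : ursubmx B' = b^T by rewrite /b trmx_dlsub Bs'.
have hB : B' = block_mx Aul b^T b C by rewrite -hbT submxK.
have hCs : C^T = C by rewrite /C trmx_drsub Bs'.
have hq : forall (x : 'cV[R]_1) (w : 'cV[R]_n),
  (col_mx x w)^T *m B' *m col_mx x w =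
  x^T *m Aul *m x + w^T *m b *m x + (x^T *m b^T *m w + w^T *m C *m w).
  move=> x w; rewrite hB tr_col_mx mul_row_block mul_row_col.
  by rewrite !mulmxDl ?mulmxA addrA.
pose a := Aul 0 0.
have hA : Aul = a%:M by rewrite [LHS]mx11_scalar.
have a0 : 0 < a.
  have nz : col_mx (1 : 'cV[R]_1) (0 : 'cV[R]_n) != 0 by rewrite col_mx_eq0 oner_eq0.
  have := Bp _ nz.
  have -> : B = B' by [].
  rewrite hq !(trmx0, mulmx0, mul0mx, addr0, trmx1, mulmx1, mul1mx).
  by rewrite -/a.
pose s := Num.sqrt a.
have s0 : 0 < s by rewrite sqrtr_gt0.
have ss : s * s = a by rewrite -expr2 sqr_sqrtr // ltW.
pose S := C - a^-1 *: (b *m b^T).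
have PS : posdef S.
  split.
    by rewrite /S linearB /= linearZ /= trmx_mul trmxK hCs.
  move=> w w0.
  pose x : 'cV[R]_1 := - (a^-1 *: (b^T *m w)).
  have nz : col_mx x w != 0 by rewrite col_mx_eq0 (negbTE w0) andbF.
  have := Bp _ nz.
  have -> : B = B' by [].
  suff -> : (col_mx x w)^T *m B' *m col_mx x w = w^T *m S *m w by [].
  rewrite hq hA /x /S.
  rewrite !(linearN, linearZ) /= !trmx_mul !trmxK.
  rewrite mul_mx_scalar ?mulmxDl !mulmxDr.
  rewrite -!(scalemxAl, scalemxAr) !(mulNmx, mulmxN) !mulmxA.
  rewrite !(scalerN, opprK, scalerA) divff ?gt_eqF // mulr1 mulmxBl -scalemxAl subrr add0r addrC.
  by [].
have [H hH] := IH S PS.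
pose G : 'M[R]_(1 + n) := block_mx s%:M 0 (s^-1 *: b) H.
exists G; suff h : B' = G *m G^T by exact h.
rewrite hB /G tr_block_mx mulmx_block !(trmx0, mulmx0, mul0mx, addr0, add0r, tr_scalar_mx).
rewrite -scalar_mxM ss -hA.
have sn0 : s != 0 by rewrite gt_eqF.
congr block_mx.
- by rewrite mul_scalar_mx linearZ /= scalerA divff // scale1r.
- by rewrite -scalemxAl (mul_mx_scalar (s : R) b) scalerA mulVf // scale1r.
- rewrite -hH /S linearZ /= -scalemxAl -scalemxAr scalerA -invfM ss.
  by rewrite addrC subrK.
Qed.
Lemma cs_ineq (R : realType) n (f g : 'I_n -> R) :
  (\sum_i f i * g i) ^+ 2 <= (\sum_i f i ^+ 2) * (\sum_i g i ^+ 2).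
Proof.
have e1 : forall i j, (f i * g j - f j * g i)^+2 =
   f i ^+2 * g j ^+2 + f j ^+2 * g i ^+2 - (f i * g i) * (f j * g j) * 2.
  by move=> i j; ring.
have A : \sum_i \sum_j f i ^+2 * g j ^+2 = (\sum_i f i ^+ 2) * (\sum_i g i ^+ 2).
  by rewrite big_distrlr.
have B : \sum_i \sum_j f j ^+2 * g i ^+2 = (\sum_i f i ^+ 2) * (\sum_i g i ^+ 2).
  by rewrite exchange_big /= big_distrlr.
have C : \sum_i \sum_j (f i * g i) * (f j * g j) * 2 = (\sum_i f i * g i) ^+ 2 * 2.
  by rewrite expr2 big_distrlr /= mulr_suml; apply: eq_bigr => i _; rewrite mulr_suml.
have E : \sum_i \sum_j (f i * g j - f j * g i) ^+ 2 =
  ((\sum_i f i ^+ 2) * (\sum_i g i ^+ 2)) * 2 - (\sum_i f i * g i) ^+ 2 * 2.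
  under eq_bigr => i _ do (under eq_bigr => j _ do rewrite e1; rewrite sumrB big_split /=).
  by rewrite sumrB big_split /= A B C; ring.
have : 0 <= \sum_i \sum_j (f i * g j - f j * g i) ^+ 2.
  by apply: sumr_ge0 => i _; apply: sumr_ge0 => j _; apply: sqr_ge0.
rewrite E => h; lra.
Qed.

Lemma psd_bound (R : realType) n (H : 'M[R]_n) (w : 'cV[R]_n) :
  (w^T *m (H *m H^T) *m w) 0 0 <= \tr (H *m H^T) * (w^T *m w) 0 0.
Proof.
have e1 : (w^T *m (H *m H^T) *m w) 0 0 = \sum_k (\sum_i H i k * w i 0) ^+ 2.
  rewrite mulmxA -mulmxA.
  have -> : w^T *m H = (H^T *m w)^T by rewrite trmx_mul trmxK.
  rewrite mxE; apply: eq_bigr => k _; rewrite !mxE expr2; congr (_ * _);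
    by apply: eq_bigr => i _; rewrite !mxE.
have e2 : \tr (H *m H^T) = \sum_k \sum_i H i k ^+2.
  rewrite /mxtrace exchange_big /=; apply: eq_bigr => i _; rewrite mxE.
  by apply: eq_bigr => k _; rewrite mxE expr2.
have e3 : (w^T *m w) 0 0 = \sum_i w i 0 ^+ 2.
  by rewrite mxE; apply: eq_bigr => i _; rewrite mxE expr2.
rewrite e1 e2 e3 mulr_suml; apply: ler_sum => k _.
exact: (@cs_ineq _ _ (fun i => H i k) (fun i => w i 0)).
Qed.

Lemma key_ineq (R : realType) n (A B : 'M[R]_n) (v : 'cV[R]_n) :
  posdef A -> posdef B ->
  (v^T *m A *m v) 0 0 <= \tr (A *m invmx B) * (v^T *m B *m v) 0 0.
Proof.
move=> PA PB; have [G hG] := chol PB.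
have Bu := posdef_unit PB.
have Gu : G \in unitmx by move: Bu; rewrite hG unitmx_mul => /andP[].
have GTu : G^T \in unitmx by rewrite unitmx_tr.
pose Gi := invmx G.
have h1 : G^T *m Gi^T = 1%:M by rewrite -trmx_mul mulVmx // trmx1.
have h2 : Gi^T *m G^T = 1%:M by rewrite -trmx_mul mulmxV // trmx1.
pose X := Gi *m A *m Gi^T.
have [As Ap] := PA.
have PX : posdef X.
  split; first by rewrite /X !trmx_mul trmxK As mulmxA.
  move=> w w0; have := Ap (Gi^T *m w).
  have -> : Gi^T *m w != 0.
    apply: contraNneq w0 => h; by rewrite -[w]mul1mx -h1 -mulmxA h mulmx0.
  move=> /(_ isT); by rewrite trmx_mul trmxK /X !mulmxA.
have [H hH] := chol PX.
have hA : A = G *m X *m G^T.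
  by rewrite /X !mulmxA mulmxV // mul1mx -mulmxA h2 mulmx1.
have hBi : invmx B = Gi^T *m Gi.
  have e : B *m (Gi^T *m Gi) = 1%:M by rewrite hG mulmxA -(mulmxA G) h1 mulmx1 mulmxV.
  by rewrite -[LHS]mulmx1 -e mulmxA mulVmx // mul1mx.
have htr : \tr (A *m invmx B) = \tr X.
  by rewrite hBi mulmxA mxtrace_mulC /X mulmxA.
rewrite htr hH.
have -> : (v^T *m A *m v) = (G^T *m v)^T *m (H *m H^T) *m (G^T *m v).
  by rewrite -hH hA trmx_mul trmxK !mulmxA.
have -> : (v^T *m B *m v) = (G^T *m v)^T *m (G^T *m v).
  by rewrite hG trmx_mul trmxK !mulmxA.
exact: psd_bound.
Qed.
Lemma bernoulli_powR (R : realType) (x al : R) : 0 <= x -> 0 < al <= 1 ->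
  x `^ al <= 1 - al + al * x.
Proof.
move=> x0 /andP[a0 a1].
have [->|alt1] := eqVneq al 1.
  by rewrite powRr1 // subrr add0r mul1r.
have a1' : al < 1 by rewrite lt_neqAle alt1 a1.
have := @conjugate_powR R (x `^ al) 1 (al^-1) ((1 - al)^-1) (powR_ge0 _ _) ler01.
rewrite invr_gt0 a0 invr_gt0 subr_gt0 a1' !invrK => /(_ isT isT).
have -> : al + (1 - al) = 1 by ring.
move=> /(_ erefl); rewrite mulr1 -powRrM divff ?gt_eqF // powRr1 // powR1 mul1r.
by move=> h; lra.
Qed.

Lemma powR_div (R : realType) (x y al : R) : 0 <= x -> 0 < y ->
  x `^ al * y `^ (- al) = (x / y) `^ al.
Proof.
move=> x0 y0; rewrite powRN.
have yal : 0 < y `^ al by rewrite powR_gt0.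
apply: (@mulIf _ (y `^ al)); first by rewrite gt_eqF.
rewrite -powRM; last 2 first.
- exact: divr_ge0 x0 (ltW y0).
- exact: ltW.
by rewrite divfK ?gt_eqF // mulrVK // unitfE gt_eqF.
Qed.
Lemma quad_delta (R : realType) n (X : 'M[R]_n) (j : 'I_n) :
  ((delta_mx j ord0 : 'cV[R]_n)^T *m X *m (delta_mx j ord0 : 'cV[R]_n)) 0 0 = X j j.
Proof. by rewrite trmx_delta -rowE -colE !mxE. Qed.

Lemma orth_sym (R : realType) n (Q : 'M[R]_n) : Q^T *m Q = 1%:M -> Q *m Q^T = 1%:M.
Proof. exact: mulmx1C. Qed.

Lemma diag_quad (R : realType) n (W : 'M[R]_n) (d : 'rV[R]_n) (j : 'I_n) :
  (W^T *m diag_mx d *m W) j j = \sum_i W i j ^+ 2 * d 0 i.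
Proof.
rewrite mxE; apply: eq_bigr => i _; rewrite mul_mx_diag !mxE; ring.
Qed.

Lemma tr_form (R : realType) n (Q U : 'M[R]_n) (a b : 'rV[R]_n) :
  \tr ((Q *m diag_mx a *m Q^T) *m (U *m diag_mx b *m U^T)) =
  \sum_j \sum_i (Q^T *m U) i j ^+ 2 * (a 0 i * b 0 j).
Proof.
set W := Q^T *m U.
have -> : (Q *m diag_mx a *m Q^T) *m (U *m diag_mx b *m U^T) =
   Q *m (diag_mx a *m W *m diag_mx b *m U^T) by rewrite !mulmxA.
rewrite mxtrace_mulC.
have -> : diag_mx a *m W *m diag_mx b *m U^T *m Q = diag_mx a *m W *m diag_mx b *m W^T.
  by rewrite /W trmx_mul trmxK !mulmxA.
rewrite /mxtrace [RHS]exchange_big /=; apply: eq_bigr => i _.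
rewrite mxE; apply: eq_bigr => j _.
rewrite mul_mx_diag mul_diag_mx !mxE; ring.
Qed.

Lemma endpoint (R : realType) n (P M Q U : 'M[R]_n) (d e : 'rV[R]_n) (al T : R) :
  spec_decomp P Q d -> spec_decomp M U e -> 0 < al <= 1 -> 0 < T ->
  (forall v : 'cV[R]_n, (v^T *m P *m v) 0 0 <= T * (v^T *m M *m v) 0 0) ->
  \tr ((Q *m diag_mx (map_mx (fun x => x `^ al) d) *m Q^T) *m
       (U *m diag_mx (map_mx (fun x => x `^ (- al)) e) *m U^T)) <= n%:R * T `^ al.
Proof.
move=> [hQ [dp hP]] [hU [ep hM]] hal T0 hv.
have hQ' := orth_sym hQ.
rewrite tr_form; set W := Q^T *m U.
have WW : W^T *m W = 1%:M.
  by rewrite /W trmx_mul trmxK mulmxA -(mulmxA U^T) hQ' mulmx1.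
have colW : forall j, \sum_i W i j ^+ 2 = 1.
  move=> j; have := congr1 (fun X : 'M[R]_n => X j j) WW; rewrite /= !mxE eqxx /= => h.
  apply: etrans h; apply: eq_bigr => i _; by rewrite expr2 [W^T j i]mxE.
have qf_conj (X : 'M[R]_n) (j : 'I_n) :
    ((U *m (delta_mx j (@ord0 0) : 'cV[R]_n))^T *m X *m (U *m (delta_mx j (@ord0 0) : 'cV[R]_n))) ord0 ord0 = (U^T *m X *m U) j j.
  by rewrite -(quad_delta (U^T *m X *m U) j) trmx_mul !mulmxA.
have bound : forall j, \sum_i W i j ^+ 2 * d 0 i <= T * e 0 j.
  move=> j; have := hv (U *m (delta_mx j (@ord0 0) : 'cV[R]_n)); rewrite !qf_conj.
  have -> : U^T *m P *m U = W^T *m diag_mx d *m W by rewrite hP /W trmx_mul trmxK !mulmxA.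
  have -> : U^T *m M *m U = diag_mx e.
    by rewrite hM !mulmxA hU mul1mx -mulmxA hU mulmx1.
  by rewrite diag_quad !mxE eqxx mulr1n.
rewrite mulr_natl -[n in _ *+ n]card_ord -sumr_const; apply: ler_sum => j _.
have ej := ep j.
clearbody W.
under eq_bigr => i _ do rewrite !mxE powR_div ?(ltW (dp i)) //.
have step : forall i, (d 0 i / e 0 j) `^ al <= T `^ al * (1 - al + al * (d 0 i / (e 0 j * T))).
  move=> i; have -> : d 0 i / e 0 j = T * (d 0 i / (e 0 j * T)).
    by field; rewrite ?gt_eqF.
  rewrite powRM ?(ltW T0) //; last by rewrite divr_ge0 // ltW // ?mulr_gt0.
  apply: ler_wpM2l; first exact: powR_ge0.
  by apply: bernoulli_powR => //; rewrite divr_ge0 // ltW // ?mulr_gt0.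
apply: (@le_trans _ _ (\sum_i W i j ^+ 2 * (T `^ al * (1 - al + al * (d 0 i / (e 0 j * T)))))).
  by apply: ler_sum => i _; apply: ler_wpM2l; [exact: sqr_ge0 | exact: step].
have -> : \sum_i W i j ^+ 2 * (T `^ al * (1 - al + al * (d 0 i / (e 0 j * T)))) =
   T `^ al * (1 - al) * (\sum_i W i j ^+ 2) + (T `^ al * al / (e 0 j * T)) * \sum_i W i j ^+ 2 * d 0 i.
  rewrite !mulr_sumr -big_split /=; apply: eq_bigr => i _.
  by field; rewrite ?gt_eqF.
rewrite colW mulr1.
have c0 : 0 <= T `^ al * al / (e 0 j * T).
  by rewrite divr_ge0 ?mulr_ge0 ?powR_ge0 ?ltW ?mulr_gt0 //; case/andP: hal.
have := ler_wpM2l c0 (bound j).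
have -> : T `^ al * al / (e 0 j * T) * (T * e 0 j) = T `^ al * al.
  by field; rewrite ?gt_eqF.
move=> h; lra.
Qed.
Lemma amgm (R : realType) k (t : nat -> R) : (0 < k)%N -> (forall i, (i < k)%N -> 0 <= t i) ->
  (\prod_(0 <= i < k) t i) `^ (k%:R^-1) <= (\sum_(0 <= i < k) t i) / k%:R.
Proof.
move=> k0 t0.
have := leif_AGM (I := 'I_k) (A := predT) (E := fun i => t i).
rewrite card_ord big_mkord => /(_ (fun i _ => t0 i (ltn_ord i))) [h _].
have S0 : 0 <= (\sum_(i < k) t i) / k%:R.
  by apply: divr_ge0 => //; apply: sumr_ge0 => i _; exact: t0.
rewrite !big_mkord.
have e : (\sum_(i < k) t i) / k%:R = (((\sum_(i < k) t i) / k%:R) ^+ k) `^ (k%:R^-1).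
  by rewrite -powR_mulrn // -powRrM divff ?pnatr_eq0 -?lt0n // powRr1.
rewrite [X in _ <= X]e.
apply: ge0_ler_powR => //; first by rewrite invr_ge0.
- by rewrite nnegrE; apply: prodr_ge0 => i _; exact: t0.
- by rewrite nnegrE exprn_ge0.
Qed.

Lemma tr_gt0 (R : realType) n (A B : 'M[R]_n.+1) :
  posdef A -> posdef B -> 0 < \tr (A *m invmx B).
Proof.
move=> PA PB; pose v : 'cV[R]_n.+1 := const_mx 1.
have v0 : v != 0.
  apply/eqP => /matrixP/(_ ord0 ord0); rewrite !mxE => /eqP; by rewrite oner_eq0.
have h := key_ineq v PA PB.
have qa := PA.2 v v0; have qb := PB.2 v v0.
by have := lt_le_trans qa h; rewrite pmulr_lgt0.
Qed.

Lemma tr_ge0 (R : realType) n (A B : 'M[R]_n) :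
  posdef A -> posdef B -> 0 <= \tr (A *m invmx B).
Proof.
case: n A B => [|n] A B PA PB; first by rewrite /mxtrace big_ord0.
exact/ltW/tr_gt0.
Qed.

Lemma chain (R : realType) n (A : nat -> 'M[R]_n) k :
  (forall i, (i <= k)%N -> posdef (A i)) ->
  forall v : 'cV[R]_n, (v^T *m A 0%N *m v) 0 0 <=
    (\prod_(0 <= i < k) \tr (A i *m invmx (A i.+1))) * (v^T *m A k *m v) 0 0.
Proof.
elim: k => [|k IH] PA v; first by rewrite big_geq // mul1r.
rewrite big_nat_recr //= -mulrA.
have PA' : forall i, (i <= k)%N -> posdef (A i).
  by move=> i hi; apply: PA; exact: (leq_trans hi (leqnSn k)).
apply: (le_trans (IH PA' v)); apply: ler_wpM2l.
  rewrite big_nat_cond; apply: prodr_ge0 => i /andP[/andP[_ hi] _].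
  by apply: tr_ge0; apply: PA; [exact: (leq_trans (ltnW hi) (leqnSn k)) | exact: (leq_trans hi (leqnSn k))].
exact: key_ineq (PA k (leqnSn k)) (PA k.+1 (leqnn _)).
Qed.

Unset Implicit Arguments.

(* A_1, ..., A_m are A 0, ..., A (m-1). *)
Theorem lemmaC2 (R : realType) (n m : nat) : (2 <= m)%N ->
  exists alpha c d : R, 0 < alpha /\ 0 < c /\ 0 <= d /\
    forall A : nat -> 'M[R]_n, (forall i, (i < m)%N -> posdef (A i)) ->
      \sum_(0 <= i < m.-1) \tr (A i *m invmx (A i.+1))
        >= c * \tr (matpow (A 0%N) alpha *m matpow (A m.-1) (- alpha)) - d.
Proof.
move=> m2.
have k0 : (0 < m.-1)%N by case: m m2 => [|[|m]].
case: n => [|n].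
  exists 1, 1, 0; split => //; split => //; split => //.
  move=> A _.
  have z : forall X : 'M[R]_0, \tr X = 0 by move=> X; rewrite /mxtrace big_ord0.
  by rewrite z mulr0 subr0 big1 // => i _; apply: z.
set k := m.-1.
have km : (k < m)%N by rewrite /k ltn_predL (leq_trans _ m2).
exists (k%:R^-1), (k%:R / n.+1%:R), 0.
split; first by rewrite invr_gt0 ltr0n.
split; first by rewrite divr_gt0 // ltr0n.
split => //.
move=> A PA.
have PAk : forall i, (i <= k)%N -> posdef (A i).
  by move=> i hi; apply: PA; exact: (leq_ltn_trans hi km).
pose t := fun i => \tr (A i *m invmx (A i.+1)).
have t0 : forall i, (i < k)%N -> 0 < t i.
  by move=> i hi; apply: tr_gt0; apply: PAk; [exact: ltnW | exact: hi].
have S0 : 0 <= \sum_(0 <= i < k) t i.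
  by rewrite big_nat_cond; apply: sumr_ge0 => i /andP[/andP[_ hi] _]; exact/ltW/t0.
have T0 : 0 < \prod_(0 <= i < k) t i.
  by rewrite big_nat_cond; apply: prodr_gt0 => i /andP[/andP[_ hi] _]; exact: t0.
have ch := @chain R n.+1 A k PAk.
have c0 : 0 <= (k%:R / n.+1%:R : R) by rewrite divr_ge0 // ler0n.
rewrite subr0 /matpow.
case: pselect => [h0|_]; last by rewrite ?mul0mx ?mulmx0 mxtrace0 mulr0.
case: pselect => [h1|_]; last by rewrite ?mul0mx ?mulmx0 mxtrace0 mulr0.
case: (cid h0) => [[Q d] hQ] /=.
case: (cid h1) => [[U e] hU] /=.
have hal : 0 < (k%:R^-1 : R) <= 1.
  by rewrite invr_gt0 ltr0n k0 /= invf_le1 ?ltr0n // ler1n.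
have E := @endpoint R n.+1 _ _ _ _ _ _ _ _ hQ hU hal T0 ch.
apply: (le_trans (ler_wpM2l c0 E)).
have am := @amgm R k t k0 (fun i hi => ltW (t0 i hi)).
rewrite mulrA divfK ?pnatr_eq0 //.
apply: (le_trans (ler_wpM2l (ler0n _ k) am)).
by rewrite mulrC divfK // pnatr_eq0 -lt0n.
Qed.
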